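(* Let $k\ge1$ and $t\ge0$ be integers, and let $P_j=\prod_{i=1}^{j}\big(1-\frac{1}{2^i}\big)$. Regarding each of the following as functions of $n$ variables for any $n$ at least the largest variable index appearing, we have: \[\mathrm{dt}_k(x_1\cdots x_k)=P_k,\] \[\mathrm{dt}_k(x_1\cdots x_k\oplus x_{k+1}\cdots x_{2k})=2P_k(1-P_k),\] \[\mathrm{dt}_{k+t}\big(x_{2k+1}\cdots x_{2k+t}(x_1\cdots x_k\oplus x_{k+1}\cdots x_{2k})\big)=2P_{k+t}(1-P_k).\]
   Context: $\oplus$ denotes addition in $\mathbb{F}_2$ and $\mathbb{F}_2^n$. For $f:\mathbb{F}_2^n\to\mathbb{F}_2$ and $1\le k\le n$, \[\mathrm{dt}_k(f)=\frac{\big|\{(u_0,\dots,u_k)\in(\mathbb{F}_2^n)^{k+1}:\ \bigoplus_{c_1,\dots,c_k\in\mathbb{F}_2} f\big((\bigoplus_{i=1}^k c_iu_i)\oplus u_0\big)\neq0\}\big|}{2^{(k+1)n}}.\] *)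

(* Defs.v *)
(* F_2 is modelled by bool, with addition = addb (xor),
   multiplication = andb. F_2^n is {ffun 'I_n -> bool}. *)
From mathcomp Require Import all_boot all_order all_algebra.
Set Implicit Arguments. Unset Strict Implicit. Unset Printing Implicit Defensive.
Import Order.TTheory GRing.Theory Num.Theory.

Definition vec (n : nat) := {ffun 'I_n -> bool}.
Definition boolfun (n : nat) := vec n -> bool.

(* (c_1 u_1 (+) ... (+) c_k u_k) (+) u_0, where u : 'I_k.+1 -> vec n,
   u ord0 = u_0 and u (lift ord0 i) = u_{i+1}, c : 'I_k -> bool. *)
Definition comb (n k : nat) (u : {ffun 'I_k.+1 -> vec n}) (c : {ffun 'I_k -> bool})
  : vec n :=
  [ffun j => (\big[addb/false]_(i < k) (c i && u (lift ord0 i) j)) (+) u ord0 j].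

Definition deriv (n k : nat) (f : boolfun n) (u : {ffun 'I_k.+1 -> vec n}) : bool :=
  \big[addb/false]_(c : {ffun 'I_k -> bool}) f (comb u c).

Definition dt (n k : nat) (f : boolfun n) : rat :=
  (#|[set u : {ffun 'I_k.+1 -> vec n} | deriv f u]|)%:R
  / (2 ^ ((k.+1) * n))%:R.

(* the variable x_i (1-based indexing) of x in F_2^n; meaningful for 1 <= i <= n *)
Definition xvar (n : nat) (x : vec n) (i : nat) : bool :=
  [exists j : 'I_n, (j.+1 == i) && x j].

(* the monomial x_a x_{a+1} ... x_b (empty product = 1 if b < a) *)
Definition mono (n a b : nat) (x : vec n) : bool :=
  \big[andb/true]_(a <= i < b.+1) xvar x i.

Definition P (j : nat) : rat :=
  \prod_(1 <= i < j.+1) (1 - 1 / (2 ^ i)%:R).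

(* Main.v *)
Require Import Defs.
From mathcomp Require Import all_boot all_order all_algebra all_fingroup.
From mathcomp.algebra_tactics Require Import ring.
From mathcomp Require Import zify.
Import Order.TTheory GRing.Theory Num.Theory.
Set Implicit Arguments. Unset Strict Implicit. Unset Printing Implicit Defensive.
Local Open Scope ring_scope.

Definition b2f (b : bool) : 'F_2 := (b : nat)%:R.

Lemma F2_cases (x : 'F_2) : x = b2f (x != 0).
Proof. by case: x => [[|[|m]] Hm] //; apply/val_inj. Qed.

Lemma b2f_xor a b : b2f (a (+) b) = b2f a + b2f b.
Proof. by case: a; case: b => //; apply/eqP. Qed.

Lemma b2f_and a b : b2f (a && b) = b2f a * b2f b.
Proof. by case: a; case: b; rewrite /b2f /= ?mul1r ?mul0r. Qed.

Lemma b2f_neq0 b : (b2f b != 0) = b.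
Proof. by case: b => //; apply/eqP. Qed.

Lemma b2f_inj a b : b2f a = b2f b -> a = b.
Proof. by move=> h; rewrite -(b2f_neq0 a) h b2f_neq0. Qed.

Lemma b2f_bigxor (I : Type) (r : seq I) (P : pred I) (F : I -> bool) :
  b2f (\big[addb/false]_(i <- r | P i) F i) = \sum_(i <- r | P i) b2f (F i).
Proof. by rewrite (big_morph b2f b2f_xor (erefl (b2f false))). Qed.

Lemma b2f_bigand (I : Type) (r : seq I) (P : pred I) (F : I -> bool) :
  b2f (\big[andb/true]_(i <- r | P i) F i) = \prod_(i <- r | P i) b2f (F i).
Proof. by rewrite (big_morph b2f b2f_and (erefl (b2f true))). Qed.

Lemma F2_two : (2%:R : 'F_2) = 0. Proof. by apply/eqP. Qed.
Lemma F2_m1 : (-1 : 'F_2) = 1. Proof. by apply/eqP. Qed.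

Definition gam K (c : {ffun 'I_K -> bool}) (i' : 'I_K.+1) : bool :=
  if unlift ord0 i' is Some i then c i else true.

Lemma sum_gamma K (phi : {ffun 'I_K -> 'I_K.+1}) :
  \sum_(c : {ffun 'I_K -> bool}) \prod_(j < K) b2f (gam c (phi j))
  = b2f [forall i, [exists j, phi j == lift ord0 i]].
Proof.
pose D := [pred i : 'I_K | ~~ [exists j, phi j == lift ord0 i]].
transitivity ((#|pffun_on true D predT|)%:R : 'F_2).
  rewrite -sum1_card natr_sum [RHS]big_mkcond; apply: eq_bigr => c _.
  rewrite -b2f_bigand big_andE.
  have -> : [forall j, gam c (phi j)] = (c \in pffun_on true D predT).
    apply/forallP/pffun_onP => [H | [Hs _] j].
      split=> //; apply/subsetP => i; rewrite !inE => ci; apply/negP => /existsP [j /eqP pj].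
      move: (H j); rewrite /gam pj liftK => h; by rewrite h in ci.
    rewrite /gam; case: (unliftP ord0 (phi j)) => [i pj|//].
    have := subsetP Hs i; rewrite !inE; case: (c i) => // /(_ isT) /negP; case.
    by apply/existsP; exists j; rewrite pj.
  by case: (c \in _).
rewrite card_pffun_on natrX (_ : #|predT| = 2%N) ?F2_two ?expr0n; last first.
  exact: card_bool.
change (b2f (#|D| == 0%N) = b2f [forall i, [exists j, phi j == lift ord0 i]]); congr b2f.
Qed.

Definition Xs n K (s : 'I_K -> nat) (u : {ffun 'I_K.+1 -> vec n.+1}) : 'M['F_2]_K :=
  \matrix_(j, i) b2f (u (lift ord0 i) (inord (s j))).

Definition liftf K (sg : 'S_K) : {ffun 'I_K -> 'I_K.+1} := [ffun j => lift ord0 (sg j)].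

Lemma liftf_inj K : injective (@liftf K).
Proof.
move=> s1 s2 h; apply/permP => j.
by have := congr1 (fun f : {ffun 'I_K -> 'I_K.+1} => f j) h; rewrite !ffunE => /lift_inj.
Qed.

Lemma surj_set K :
  [set phi : {ffun 'I_K -> 'I_K.+1} | [forall i, [exists j, phi j == lift ord0 i]]]
  = (@liftf K) @: setT.
Proof.
apply/setP => phi; rewrite inE; apply/idP/imsetP.
  move=> /forallP S.
  pose psi (i : 'I_K) : 'I_K := odflt i [pick j | phi j == lift ord0 i].
  have psiP i : phi (psi i) = lift ord0 i.
    rewrite /psi; case: pickP => [j /eqP //|H].
    by have /existsP [j /eqP hj] := S i; move: (H j); rewrite hj eqxx.
  have psi_inj : injective psi.
    by move=> a b h; apply: (@lift_inj _ ord0); rewrite -!psiP h.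
  pose s0 := perm psi_inj.
  exists (s0^-1)%g; first by [].
  apply/ffunP => j; rewrite ffunE -{1}(permKV s0 j) permE psiP.
  by [].
move=> [sg _ ->]; apply/forallP => i; apply/existsP; exists ((sg^-1)%g i).
by rewrite ffunE permKV.
Qed.

Lemma derivA n K (s : 'I_K -> nat) (u : {ffun 'I_K.+1 -> vec n.+1}) :
  Defs.deriv (fun x : vec n.+1 => \big[andb/true]_(j < K) x (inord (s j))) u
  = (\det (Xs s u) != 0).
Proof.
suff H : b2f (Defs.deriv (fun x : vec n.+1 => \big[andb/true]_(j < K) x (inord (s j))) u)
  = \det (Xs s u) by rewrite -H b2f_neq0.
rewrite /Defs.deriv b2f_bigxor.
pose W j (i' : 'I_K.+1) : 'F_2 :=
  if unlift ord0 i' is Some i then Xs s u j i else b2f (u ord0 (inord (s j))).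
transitivity (\sum_(c : {ffun 'I_K -> bool})
   \prod_(j < K) \sum_(i' : 'I_K.+1) b2f (gam c i') * W j i').
  apply: eq_bigr => c _; rewrite b2f_bigand; apply: eq_bigr => j _.
  rewrite /comb ffunE b2f_xor b2f_bigxor big_ord_recl /= addrC.
  rewrite /gam /W unlift_none mul1r; congr (_ + _).
  by apply: eq_bigr => i _; rewrite liftK b2f_and mxE.
transitivity (\sum_(c : {ffun 'I_K -> bool}) \sum_(phi : {ffun 'I_K -> 'I_K.+1})
   (\prod_(j < K) b2f (gam c (phi j))) * \prod_(j < K) W j (phi j)).
  apply: eq_bigr => c _; rewrite bigA_distr_bigA; apply: eq_bigr => phi _.
  by rewrite big_split.
rewrite exchange_big.
transitivity (\sum_(phi : {ffun 'I_K -> 'I_K.+1})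
   b2f [forall i, [exists j, phi j == lift ord0 i]] * \prod_(j < K) W j (phi j)).
  by apply: eq_bigr => phi _; rewrite -big_distrl sum_gamma.
transitivity (\sum_(phi in [set phi : {ffun 'I_K -> 'I_K.+1} |
                 [forall i, [exists j, phi j == lift ord0 i]]]) \prod_(j < K) W j (phi j)).
  rewrite [RHS]big_mkcond; apply: eq_bigr => phi _; rewrite inE.
  by case: [forall i, _]; rewrite /b2f /= ?mul1r ?mul0r.
rewrite surj_set big_imset; last by move=> a b _ _; apply: liftf_inj.
rewrite /determinant; apply: eq_big => [sg|sg _]; first by rewrite inE.
rewrite F2_m1 expr1n mul1r; apply: eq_bigr => j _.
by rewrite /W ffunE liftK.
Qed.

Definition PhiM n m K (u : {ffun 'I_K.+1 -> vec n.+1}) : 'M['F_2]_(m, K) :=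
  \matrix_(j, i) b2f (u (lift ord0 i) (inord j)).

Definition xoru n K (u v : {ffun 'I_K.+1 -> vec n}) : {ffun 'I_K.+1 -> vec n} :=
  [ffun i => [ffun j => u i j (+) v i j]].

Lemma xoruK n K (w : {ffun 'I_K.+1 -> vec n}) : involutive (fun v => xoru v w).
Proof.
move=> v; apply/ffunP => i; apply/ffunP => j; rewrite !ffunE.
by rewrite -addbA addbb addbF.
Qed.

Lemma PhiM_add n m K (u v : {ffun 'I_K.+1 -> vec n.+1}) :
  PhiM m (xoru u v) = PhiM m u + PhiM m v.
Proof. by apply/matrixP => j i; rewrite !mxE !ffunE b2f_xor. Qed.

Section Transfer.
Variables (n m K : nat) (hm : (m <= n.+1)%N).

Definition uM (M : 'M['F_2]_(m, K)) : {ffun 'I_K.+1 -> vec n.+1} :=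
  [ffun i => [ffun c => [exists j : 'I_m, exists i0 : 'I_K,
     (i == lift ord0 i0) && (c == inord j) && (M j i0 != 0)]]].

Lemma inord_eq (j j' : 'I_m) : ((inord j : 'I_n.+1) == inord j') = (j == j').
Proof.
apply/eqP/eqP => [h|->//]; apply/val_inj.
have := congr1 (@nat_of_ord _) h.
rewrite !inordK //.
  by apply: leq_trans (ltn_ord j') hm.
by apply: leq_trans (ltn_ord j) hm.
Qed.

Lemma PhiM_uM M : PhiM m (uM M) = M.
Proof.
apply/matrixP => j i; rewrite mxE !ffunE [RHS]F2_cases; congr b2f.
apply/existsP/idP => [[j' /existsP [i0]]|h].
  rewrite inord_eq (inj_eq (@lift_inj _ ord0)).
  by move=> /andP [/andP [/eqP -> /eqP ->]].
by exists j; apply/existsP; exists i; rewrite !eqxx h.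
Qed.

Let c0 := #|[set u : {ffun 'I_K.+1 -> vec n.+1} | PhiM m u == 0]|.

Lemma fiber M : #|[set u : {ffun 'I_K.+1 -> vec n.+1} | PhiM m u == M]| = c0.
Proof.
rewrite /c0 -(card_preimset _ (inv_inj (xoruK (uM M)))); apply: eq_card => v.
rewrite !inE PhiM_add PhiM_uM.
by rewrite -subr_eq0 addrK.
Qed.

Lemma count_Q (Q : pred 'M['F_2]_(m, K)) :
  #|[set u : {ffun 'I_K.+1 -> vec n.+1} | Q (PhiM m u)]| = (#|[set M | Q M]| * c0)%N.
Proof.
rewrite -[LHS]sum1dep_card.
rewrite (@partition_big _ _ _ _ _ _ (fun u => Q (PhiM m u)) (fun u => PhiM m u) Q) //.
rewrite -sum_nat_cond_const; apply: eq_bigr => M QM.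
rewrite sum1dep_card -(fiber M); apply: eq_card => u; rewrite !inE.
by case: (PhiM m u =P M) => [->|]; rewrite ?QM ?andbF.
Qed.

Lemma transfer (Q : pred 'M['F_2]_(m, K)) :
  (#|[set u : {ffun 'I_K.+1 -> vec n.+1} | Q (PhiM m u)]| * 2^(m*K)
   = #|[set M | Q M]| * 2^(K.+1 * n.+1))%N.
Proof.
have tot := count_Q predT.
have e1 : #|[set u : {ffun 'I_K.+1 -> vec n.+1} | predT (PhiM m u)]| = (2^(K.+1 * n.+1))%N.
  rewrite cardsT card_ffun card_ffun card_bool !card_ord.
  by rewrite -expnM mulnC.
have e2 : #|[set M : 'M['F_2]_(m, K) | predT M]| = (2^(m*K))%N.
  by rewrite cardsT card_mx card_Fp.
rewrite e1 e2 in tot; rewrite tot count_Q.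
by rewrite [(2 ^ _ * c0)%N]mulnC mulnA.
Qed.
End Transfer.

Lemma dt_transfer n m K (hm : (m <= n.+1)%N) (f : boolfun n.+1)
    (Q : pred 'M['F_2]_(m, K)) :
  (forall u, Defs.deriv f u = Q (PhiM m u)) ->
  dt K f = (\sum_(M : 'M['F_2]_(m, K)) ((Q M : nat)%:R : rat)) / (2^(m*K))%:R.
Proof.
move=> hQ; rewrite /dt.
have -> : [set u | Defs.deriv f u] = [set u | Q (PhiM m u)].
  by apply/setP => u; rewrite !inE hQ.
have -> : \sum_(M : 'M['F_2]_(m, K)) ((Q M : nat)%:R : rat) = (#|[set M | Q M]|)%:R.
  rewrite -sum1dep_card natr_sum [RHS]big_mkcond; apply: eq_bigr => M _.
  by case: (Q M).
have e := transfer hm Q.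
apply/eqP; rewrite eqr_div ?pnatr_eq0 ?expn_eq0 //.
by rewrite -!natrM e.
Qed.

Lemma sum_col (R : nmodType) (T : finType) m1 m2 n
    (F : 'M[T]_(m1, n) -> 'M[T]_(m2, n) -> R) :
  \sum_(M : 'M[T]_(m1 + m2, n)) F (usubmx M) (dsubmx M) = \sum_A \sum_B F A B.
Proof.
rewrite pair_bigA /= (reindex (fun p : 'M[T]_(m1, n) * 'M[T]_(m2, n) => col_mx p.1 p.2)).
  by apply: eq_bigr => p _; rewrite col_mxKu col_mxKd.
exists (fun M => (usubmx M, dsubmx M)) => [p _|M _].
  by rewrite col_mxKu col_mxKd; case: p.
by rewrite vsubmxK.
Qed.

Lemma sum_row (R : nmodType) (T : finType) m n1 n2
    (F : 'M[T]_(m, n1) -> 'M[T]_(m, n2) -> R) :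
  \sum_(M : 'M[T]_(m, n1 + n2)) F (lsubmx M) (rsubmx M) = \sum_A \sum_B F A B.
Proof.
rewrite pair_bigA /= (reindex (fun p : 'M[T]_(m, n1) * 'M[T]_(m, n2) => row_mx p.1 p.2)).
  by apply: eq_bigr => p _; rewrite row_mxKl row_mxKr.
exists (fun M => (lsubmx M, rsubmx M)) => [p _|M _].
  by rewrite row_mxKl row_mxKr; case: p.
by rewrite hsubmxK.
Qed.

Lemma Pform m :
  ((2%:R : rat) ^+ 'C(m, 2) * \prod_(1 <= i < m.+1) (2%:R ^+ i - 1))
    / 2%:R ^+ (m * m) = P m.
Proof.
elim: m => [|m IH]; first by rewrite /P !big_geq // bin0n expr0 mul1r divr1.
rewrite [P m.+1]/P [in RHS]big_nat_recr //= -/(P m) -IH [in LHS]big_nat_recr //=.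
rewrite binS bin1 (_ : (m.+1 * m.+1 = m * m + m + m.+1)%N); last first.
  lia.
rewrite !exprD exprS.
have h2 : (2%:R : rat) != 0 by [].
have hx : forall k, (2%:R : rat) ^+ k != 0 by move=> k; rewrite expf_neq0.
rewrite natrX exprS.
move: (hx m) (hx (m * m)) (hx 'C(m, 2)).
set a := 2 ^+ 'C(m, 2); set b := 2 ^+ m; set c := 2 ^+ (m * m).
set p := \prod_(_ <= _ < _) _ => hb hc ha.
field; by rewrite hb hc.
Qed.

Definition G m := \sum_(M : 'M['F_2]_m) (((\det M != 0) : nat)%:R : rat).

Lemma GP m : (0 < m)%N -> G m / (2^(m * m))%:R = P m.
Proof.
case: m => // m _.
have -> : G m.+1 = (#|GLgroup m.+1 'F_2|)%:R.
  rewrite cardsT /= card_sub /G.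
  transitivity ((#|[set M : 'M['F_2]_m.+1 | \det M != 0]|)%:R : rat).
    rewrite -sum1dep_card natr_sum [RHS]big_mkcond; apply: eq_bigr => M _ /=.
    by case: (\det M != 0).
  by congr (_%:R); apply: eq_card => M; rewrite !inE unitmxE unitfE.
rewrite (card_GL _ (ltn0Sn m)) // card_Fp // -Pform natrM natr_prod natrX natrX.
congr (_ * _ / _).
apply: eq_big_nat => i /andP [hi _].
by rewrite natrB ?expn_gt0 // natrX.
Qed.

Lemma xvarE n (x : vec n.+1) i : (0 < i <= n.+1)%N -> xvar x i = x (inord i.-1).
Proof.
move=> /andP [h0 h1]; apply/existsP/idP => [[j /andP [/eqP hj xj]]|xi].
  suff -> : inord i.-1 = j by [].
  by apply: ord_inj; rewrite inordK -hj //= ltnS -ltnS hj.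
exists (inord i.-1); rewrite xi andbT inordK; last by rewrite prednK.
by rewrite prednK.
Qed.

Lemma monoE n (x : vec n.+1) a L : (a + L <= n.+1)%N ->
  mono a.+1 (a + L) x = \big[andb/true]_(j < L) x (inord (a + j)).
Proof.
move=> h; rewrite /mono -{1}(add0n a.+1) big_addn subSS addKn big_mkord.
apply: eq_bigr => j _; rewrite xvarE; last first.
  by have := ltn_ord j; lia.
by rewrite addnS /= addnC.
Qed.

Lemma deriv_ext n K (f g : boolfun n) (u : {ffun 'I_K.+1 -> vec n}) : f =1 g -> Defs.deriv f u = Defs.deriv g u.
Proof. by move=> h; apply: eq_bigr => c _; rewrite h. Qed.

Lemma dt_ext n K (f g : boolfun n) : f =1 g -> dt K f = dt K g.
Proof.
move=> h; rewrite /dt; congr (_%:R / _); apply: eq_card => u.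
by rewrite !inE (deriv_ext _ h).
Qed.

Lemma deriv_xor n K (f g : boolfun n) (u : {ffun 'I_K.+1 -> vec n}) :
  Defs.deriv (fun x => f x (+) g x) u = Defs.deriv f u (+) Defs.deriv g u.
Proof. by rewrite /Defs.deriv big_split. Qed.

Lemma part1 k (hk : (1 <= k)%N) n : (k <= n)%N ->
  dt k (fun x : vec n => mono 1 k x) = P k.
Proof.
case: n => [|n] hn; first by case: k hk hn.
rewrite (@dt_ext _ _ _ (fun x : vec n.+1 => \big[andb/true]_(j < k) x (inord (0 + j)))); last first.
  by move=> x; rewrite -(monoE x (a:=0)) .
rewrite (@dt_transfer _ k _ hn _ (fun M => \det M != 0)); last first.
  move=> u; rewrite derivA; congr (\det _ != 0).
by rewrite -GP.
Qed.

Lemma mono1E n (x : vec n.+1) L : (L <= n.+1)%N ->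
  mono 1 L x = \big[andb/true]_(j < L) x (inord j).
Proof.
move=> h; rewrite (_ : mono 1 L x = mono 1 (0 + L) x) // monoE //.

Qed.

Lemma xor_rat (b c : bool) :
  (((b (+) c) : nat)%:R : rat) = (b : nat)%:R + (c : nat)%:R - 2 * ((b : nat)%:R * (c : nat)%:R).
Proof. by case: b; case: c => /=; rewrite ?mul0r ?mulr0 ?mul1r ?mulr1 ?subr0 ?addr0 ?add0r; ring. Qed.

Lemma sum_constN (T : finType) (c : rat) : \sum_(x : T) c = c * \sum_(x : T) 1.
Proof. by rewrite mulr_sumr; apply: eq_bigr => x _; rewrite mulr1. Qed.

Lemma sum1M a b : \sum_(x : 'M['F_2]_(a, b)) (1 : rat) = (2 ^ (a * b))%:R.
Proof. by rewrite sumr_const card_mx card_Fp. Qed.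

Lemma sum2_lin (I J : finType) (x y z : I -> J -> rat) :
  \sum_a \sum_b (x a b + y a b - 2 * z a b)
  = \sum_a \sum_b x a b + \sum_a \sum_b y a b - 2 * \sum_a \sum_b z a b.
Proof.
rewrite mulr_sumr -big_split -sumrB; apply: eq_bigr => a _.
by rewrite mulr_sumr -big_split -sumrB.
Qed.

Lemma part2 k (hk : (1 <= k)%N) n : (2 * k <= n)%N ->
  dt k (fun x : vec n => mono 1 k x (+) mono k.+1 (2 * k) x) = 2 * P k * (1 - P k).
Proof.
case: n => [|n] hn; first by lia.
have hkk : (k + k <= n.+1)%N by lia.
rewrite (@dt_ext _ _ _ (fun x : vec n.+1 => \big[andb/true]_(j < k) x (inord j)
     (+) \big[andb/true]_(j < k) x (inord (k + j)))); last first.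
  by move=> x; rewrite mono1E ?mul2n -?addnn ?monoE //; lia.
rewrite (@dt_transfer _ (k + k) _ hkk _
   (fun M => (\det (usubmx M) != 0) (+) (\det (dsubmx M) != 0))); last first.
  move=> u; rewrite deriv_xor !derivA.
  have e1 : Xs (@nat_of_ord k) u = usubmx (PhiM (k + k) u).
    by apply/matrixP => j i; rewrite !mxE.
  have e2 : Xs (fun j : 'I_k => (k + j)%N) u = dsubmx (PhiM (k + k) u).
    by apply/matrixP => j i; rewrite !mxE.
  by rewrite e1 e2.
have SC := @sum_col rat _ k k k (fun A B => (((\det A != 0) (+) (\det B != 0) : bool) : nat)%:R).
rewrite /= in SC; rewrite SC.
under eq_bigr => A _ do under eq_bigr => B _ do rewrite xor_rat.
rewrite sum2_lin.
under eq_bigr => A _ do rewrite sum_constN sum1M.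
rewrite -mulr_suml.
rewrite [X in _ + X - _]sum_constN sum1M -big_distrlr /=.
rewrite -/(G k).
have -> : (2 ^ ((k + k) * k))%:R = (2 ^ (k * k))%:R * (2 ^ (k * k))%:R :> rat.
  by rewrite -natrM -expnD mulnDl.
rewrite -(GP hk).
have h0 : (2 ^ (k * k))%:R != 0 :> rat by rewrite pnatr_eq0 expn_eq0.
by field.
Qed.

Section NT.
Variables k t : nat.

Definition T0 : 'M['F_2]_(t, k + t) := dsubmx (1%:M : 'M['F_2]_(k + t)).

Definition eAT (A : 'M['F_2]_(k, k + t)) (T : 'M['F_2]_(t, k + t)) : rat :=
  ((\det (col_mx A T) != 0 : nat)%:R).

Definition NT (T : 'M['F_2]_(t, k + t)) : rat := \sum_(A : 'M['F_2]_(k, k + t)) eAT A T.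

Lemma NT_T0 : NT T0 = G k * (2 ^ (k * t))%:R.
Proof.
have SR := @sum_row rat _ k k t (fun A1 A2 => eAT (row_mx A1 A2) T0).
rewrite /= in SR.
rewrite /NT (eq_bigr (fun A => eAT (row_mx (lsubmx A) (rsubmx A)) T0)); last first.
  by move=> A _; rewrite hsubmxK.
rewrite SR.
have hT0 : T0 = row_mx 0 1%:M.
  by rewrite /T0 (scalar_mx_block k t 1) /block_mx col_mxKd.
rewrite /G mulr_suml; apply: eq_bigr => A1 _.
rewrite (eq_bigr (fun _ => ((\det A1 != 0 : nat)%:R : rat))); last first.
  move=> B _; rewrite /eAT hT0.
  rewrite (_ : col_mx (row_mx A1 B) (row_mx 0 1%:M) = block_mx A1 B 0 1%:M) //.
  by rewrite det_ublock det1 mulr1.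
by rewrite sum_constN sum1M.
Qed.

Lemma NT_sq T : NT T * NT T = NT T0 * NT T.
Proof.
case: (boolP [exists A : 'M['F_2]_(k, k + t), \det (col_mx A T) != 0]) =>
    [/existsP [A1 hA1] | hno]; last first.
  have -> : NT T = 0; last by rewrite !mulr0.
  apply: big1 => A _; move: hno; rewrite negb_exists => /forallP /(_ A).
  by rewrite /eAT => /negbTE ->.
congr (_ * _).
set C := col_mx A1 T.
have Cu : C \in unitmx by rewrite unitmxE unitfE.
have TC : T *m invmx C = T0.
  by have := mulmxV Cu; rewrite /C mul_col_mx => h; rewrite /T0 -h col_mxKd.
rewrite /NT [RHS](reindex_inj (can_inj (mulmxKV Cu))) /=.
apply: eq_bigr => A _; rewrite /eAT -TC -mul_col_mx det_mulmx mulf_eq0.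
have : \det (invmx C) != 0 by rewrite -unitfE -unitmxE unitmx_inv.
by move=> /negbTE ->; rewrite orbF.
Qed.

End NT.

Lemma andb_xorr a b c : a && (b (+) c) = (a && b) (+) (a && c).
Proof. by case: a; case: b; case: c. Qed.

Lemma sum3_lin (I J L : finType) (x y z : I -> J -> L -> rat) :
  \sum_a \sum_b \sum_c (x a b c + y a b c - 2 * z a b c)
  = \sum_a \sum_b \sum_c x a b c + \sum_a \sum_b \sum_c y a b c
    - 2 * \sum_a \sum_b \sum_c z a b c.
Proof.
rewrite mulr_sumr -big_split -sumrB; apply: eq_bigr => a _.
rewrite mulr_sumr -big_split -sumrB; apply: eq_bigr => b _.
by rewrite mulr_sumr -big_split -sumrB.
Qed.

Lemma part3 k t (hk : (1 <= k)%N) n : (2 * k + t <= n)%N ->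
  dt (k + t) (fun x : vec n =>
     mono (2 * k).+1 (2 * k + t) x && (mono 1 k x (+) mono k.+1 (2 * k) x))
  = 2 * P (k + t) * (1 - P k).
Proof.
case: n => [|n] hn; first by lia.
have hm : (k + k + t <= n.+1)%N by lia.
pose s1 (j : 'I_(k + t)) := if (j < k)%N then nat_of_ord j else (k + j)%N.
rewrite (@dt_ext _ _ _ (fun x : vec n.+1 =>
     \big[andb/true]_(j < k + t) x (inord (s1 j))
     (+) \big[andb/true]_(j < k + t) x (inord (k + j)))); last first.
  move=> x; rewrite mul2n -addnn mono1E; last by lia.
  rewrite !monoE; try lia.
  rewrite andb_xorr; congr (_ (+) _); rewrite big_split_ord andbC; congr (_ && _).
  - by apply: eq_bigr => j _; rewrite /s1 /= ltn_ord.
  - apply: eq_bigr => j _; rewrite /s1 /= ltnNge leq_addr /=.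
    by rewrite addnA.
  - by apply: eq_bigr => j _; rewrite /= addnA.
rewrite (@dt_transfer _ (k + k + t) _ hm _
   (fun M => (\det (col_mx (usubmx (usubmx M)) (dsubmx M)) != 0)
          (+) (\det (col_mx (dsubmx (usubmx M)) (dsubmx M)) != 0))); last first.
  move=> u; rewrite deriv_xor !derivA.
  have e1 : Xs s1 u = col_mx (usubmx (usubmx (PhiM (k + k + t) u))) (dsubmx (PhiM (k + k + t) u)).
    apply/matrixP => j i; rewrite -[j](splitK j); case: (split j) => j' /=.
      by rewrite col_mxEu !mxE /s1 /= ltn_ord.
    by rewrite col_mxEd !mxE /s1 /= ltnNge leq_addr /= addnA.
  have e2 : Xs (fun j : 'I_(k + t) => (k + j)%N) u =
      col_mx (dsubmx (usubmx (PhiM (k + k + t) u))) (dsubmx (PhiM (k + k + t) u)).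
    apply/matrixP => j i; rewrite -[j](splitK j); case: (split j) => j' /=.
      by rewrite col_mxEu !mxE.
    by rewrite col_mxEd !mxE /= addnA.
  by rewrite e1 e2.
have SC1 := @sum_col rat _ (k + k) t (k + t) (fun AB T =>
   (((\det (col_mx (usubmx AB) T) != 0) (+) (\det (col_mx (dsubmx AB) T) != 0) : bool) : nat)%:R).
rewrite /= in SC1; rewrite SC1.
have SC2 := @sum_col rat _ k k (k + t) (fun A B => \sum_(T : 'M['F_2]_(t, k + t))
   (((\det (col_mx A T) != 0) (+) (\det (col_mx B T) != 0) : bool) : nat)%:R).
rewrite /= in SC2; rewrite SC2.
under eq_bigr => A _ do under eq_bigr => B _ do under eq_bigr => T _ do rewrite xor_rat.
rewrite sum3_lin.
have GC : G (k + t) = \sum_(A : 'M['F_2]_(k, k + t)) \sum_(T : 'M['F_2]_(t, k + t)) @eAT k t A T.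
  have SC3 := @sum_col rat _ k t (k + t) (fun A T => @eAT k t A T).
  rewrite /= in SC3; rewrite -SC3 /G; apply: eq_bigr => M _.
  by rewrite /eAT vsubmxK.
have E1 : \sum_(a : 'M['F_2]_(k, k + t)) \sum_(b : 'M['F_2]_(k, k + t))
    \sum_(c : 'M['F_2]_(t, k + t)) @eAT k t a c = G (k + t) * (2 ^ (k * (k + t)))%:R.
  under eq_bigr => a _ do rewrite sum_constN sum1M.
  by rewrite -mulr_suml GC.
have E2 : \sum_(a : 'M['F_2]_(k, k + t)) \sum_(b : 'M['F_2]_(k, k + t))
    \sum_(c : 'M['F_2]_(t, k + t)) @eAT k t b c = G (k + t) * (2 ^ (k * (k + t)))%:R.
  by rewrite sum_constN sum1M -GC.
have E3 : \sum_(a : 'M['F_2]_(k, k + t)) \sum_(b : 'M['F_2]_(k, k + t))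
    \sum_(c : 'M['F_2]_(t, k + t)) @eAT k t a c * @eAT k t b c = NT (T0 k t) * G (k + t).
  transitivity (\sum_(c : 'M['F_2]_(t, k + t)) NT c * NT c).
    under eq_bigr => a _ do rewrite exchange_big.
    rewrite exchange_big; apply: eq_bigr => c _.
    by rewrite /NT big_distrlr.
  under eq_bigr => c _ do rewrite NT_sq.
  by rewrite -mulr_sumr GC exchange_big.
rewrite /eAT in E1 E2 E3; rewrite E1 E2 E3 NT_T0.
have ex1 : (2 ^ ((k + k + t) * (k + t)))%:R
    = (2 ^ (k * k))%:R * (2 ^ (k * t))%:R * (2 ^ ((k + t) * (k + t)))%:R :> rat.
  by rewrite -!natrM -!expnD; congr (2 ^ _)%:R; ring.
have ex2 : (2 ^ (k * (k + t)))%:R = (2 ^ (k * k))%:R * (2 ^ (k * t))%:R :> rat.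
  by rewrite -!natrM -!expnD mulnDr.
have hkt : (0 < k + t)%N by lia.
rewrite ex1 ex2 -(GP hk) -(GP hkt).
have nz : forall e, (2 ^ e)%:R != 0 :> rat by move=> e; rewrite pnatr_eq0 expn_eq0.
move: (nz (k * k)) (nz (k * t)) (nz ((k + t) * (k + t))).
set a := (2 ^ (k * k))%:R; set b := (2 ^ (k * t))%:R; set c := (2 ^ ((k + t) * (k + t)))%:R.
move=> ha hb hc.
by field; rewrite ha hb hc.
Qed.

Theorem corollary2 (k t : nat) (hk : (1 <= k)%N) :
  (forall n : nat, (k <= n)%N ->
     dt k (fun x : vec n => mono 1 k x) = P k) /\
  (forall n : nat, (2 * k <= n)%N ->
     dt k (fun x : vec n => mono 1 k x (+) mono k.+1 (2 * k) x)
       = 2 * P k * (1 - P k)) /\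
  (forall n : nat, (2 * k + t <= n)%N ->
     dt (k + t) (fun x : vec n =>
          mono (2 * k).+1 (2 * k + t) x && (mono 1 k x (+) mono k.+1 (2 * k) x))
       = 2 * P (k + t) * (1 - P k)).
Proof.
split; first exact: part1.
split; first exact: part2.
exact: part3.
Qed.
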